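(* Let $G$ be a locally compact group, $X$ a proper $G$-space, $H$ a compact subgroup of $G$, and $S\subset X$ a global $H$-slice of $X$ which is a small subset of $X$. Then: (1) the restriction $f:G\times S\to X$, $f(g,s)=gs$, of the action is an open map; (2) the restriction $p:S\to X/G$ of the orbit map $X\to X/G$ is an open map.
   Context: All spaces are completely regular Hausdorff. A $G$-space is a space $X$ with a continuous action $G\times X\to X$, $(g,x)\mapsto gx$, with $ex=x$ and $(gh)x=g(hx)$. For $S\subset X$ and a subgroup $H\subset G$, $H(S)=\{hs\mid h\in H, s\in S\}$; $X/G$ is the orbit space with the quotient topology. For a closed subgroup $H\subset G$, a subset $S\subset X$ is an $H$-slice in $X$ if: (i) $H(S)=S$; (ii) $S$ is closed in $G(S)$; (iii) if $g\in G\setminus H$ then $gS\cap S=\emptyset$; (iv) $G(S)$ is open in $X$. It is a global $H$-slice if moreover $G(S)=X$. For $U,V\subset X$ the transporter is $\langle U,V\rangle=\{g\in G\mid gU\cap V\neq\emptyset\}$; $U$ and $V$ are thin relative to each other if $\langle U,V\rangle$ has compact closure in $G$. A subset $U\subset X$ is small if every point of $X$ has a neighborhood thin relative to $U$. For $G$ locally compact, a $G$-space $X$ is proper if every point of $X$ has a small neighborhood. *)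

(* Defs.v *)
From Stdlib Require Import Reals List Classical.

Record TopSpace := {
  carrier :> Type;
  is_open : (carrier -> Prop) -> Prop;
  open_full : is_open (fun _ => True);
  open_inter : forall U V, is_open U -> is_open V -> is_open (fun x => U x /\ V x);
  open_union : forall F : (carrier -> Prop) -> Prop,
      (forall U, F U -> is_open U) -> is_open (fun x => exists U, F U /\ U x)
}.
Arguments is_open {t} _.

Section Top.
Context {X : TopSpace}.

Definition nbhd (N : X -> Prop) (x : X) : Prop :=
  exists U, is_open U /\ U x /\ forall y, U y -> N y.

Definition is_closed (A : X -> Prop) : Prop := is_open (fun x => ~ A x).

Definition closure (A : X -> Prop) : X -> Prop :=
  fun x => forall U, is_open U -> U x -> exists y, U y /\ A y.

Definition compact (K : X -> Prop) : Prop :=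
  forall F : (X -> Prop) -> Prop,
    (forall U, F U -> is_open U) ->
    (forall x, K x -> exists U, F U /\ U x) ->
    exists l : list (X -> Prop),
      (forall U, In U l -> F U) /\ (forall x, K x -> exists U, In U l /\ U x).

Definition rel_compact (A : X -> Prop) : Prop := compact (closure A).

Definition hausdorff : Prop :=
  forall x y : X, x <> y ->
    exists U V, is_open U /\ is_open V /\ U x /\ V y /\ forall z, ~ (U z /\ V z).

Definition continuous_R (f : X -> R) : Prop :=
  forall x eps, (eps > 0)%R ->
    exists U, is_open U /\ U x /\ forall y, U y -> (Rabs (f y - f x) < eps)%R.

Definition completely_regular : Prop :=
  forall (F : X -> Prop) (x : X), is_closed F -> ~ F x ->
    exists f : X -> R, continuous_R f /\ f x = 0%R /\ forall y, F y -> f y = 1%R.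

Definition tychonoff : Prop := hausdorff /\ completely_regular.

Definition locally_compact : Prop :=
  forall x : X, exists K, nbhd K x /\ compact K.

Definition subspace_open (S A : X -> Prop) : Prop :=
  exists W, is_open W /\ forall x, A x <-> (S x /\ W x).

End Top.

Record TopGroup := {
  gspace :> TopSpace;
  gmul : gspace -> gspace -> gspace;
  ginv : gspace -> gspace;
  gone : gspace;
  gmulA : forall a b c, gmul a (gmul b c) = gmul (gmul a b) c;
  gmul1 : forall a, gmul gone a = a;
  gmulV : forall a, gmul (ginv a) a = gone;
  gmul_cont : forall a b (W : gspace -> Prop), is_open W -> W (gmul a b) ->
     exists U V, is_open U /\ is_open V /\ U a /\ V b /\
       forall u v, U u -> V v -> W (gmul u v);
  ginv_cont : forall a (W : gspace -> Prop), is_open W -> W (ginv a) ->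
     exists U, is_open U /\ U a /\ forall u, U u -> W (ginv u)
}.

Section GSpace.
Context {G : TopGroup} {X : TopSpace} (act : G -> X -> X).

Definition is_G_space : Prop :=
  (forall x, act (gone G) x = x) /\
  (forall g h x, act (gmul G g h) x = act g (act h x)) /\
  (forall g x (W : X -> Prop), is_open W -> W (act g x) ->
     exists (U : G -> Prop) (V : X -> Prop), is_open U /\ is_open V /\ U g /\ V x /\
       forall u v, U u -> V v -> W (act u v)).

Definition is_subgroup (H : G -> Prop) : Prop :=
  H (gone G) /\ (forall a b, H a -> H b -> H (gmul G a b)) /\
  (forall a, H a -> H (ginv G a)).

Definition gsat (K : G -> Prop) (S : X -> Prop) : X -> Prop :=
  fun x => exists g s, K g /\ S s /\ x = act g s.

Definition full_group : G -> Prop := fun _ => True.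

Definition transporter (U V : X -> Prop) : G -> Prop :=
  fun g => exists u, U u /\ V (act g u).

Definition thin (U V : X -> Prop) : Prop := rel_compact (transporter U V).

Definition small (U : X -> Prop) : Prop :=
  forall x, exists V, nbhd V x /\ thin V U.

Definition proper_action : Prop :=
  forall x, exists U, nbhd U x /\ small U.

Definition is_slice (H : G -> Prop) (S : X -> Prop) : Prop :=
  (forall x, gsat H S x <-> S x) /\
  (forall x, gsat full_group S x -> closure S x -> S x) /\
  (forall g, ~ H g -> forall s, S s -> ~ S (act g s)) /\
  is_open (gsat full_group S).

Definition is_global_slice (H : G -> Prop) (S : X -> Prop) : Prop :=
  is_slice H S /\ forall x, gsat full_group S x.

(** open subsets of G × S (product of G with the subspace S), as
    relations [O g s] with [s ∈ S] *)
Definition prod_sub_open (S : X -> Prop) (O : G -> X -> Prop) : Prop :=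
  (forall g x, O g x -> S x) /\
  (forall g s, O g s ->
     exists (U : G -> Prop) (W : X -> Prop), is_open U /\ is_open W /\ U g /\ W s /\
       forall g' s', U g' -> W s' -> S s' -> O g' s').

Definition orbit (x : X) : X -> Prop := fun y => exists g, y = act g x.

Definition orbit_space : Type := { O : X -> Prop | exists x, O = orbit x }.

Definition orbit_map (x : X) : orbit_space :=
  exist _ (orbit x) (ex_intro _ x eq_refl).

Definition quotient_open (V : orbit_space -> Prop) : Prop :=
  is_open (fun x => V (orbit_map x)).

End GSpace.

(* Main.v *)
From Stdlib Require Import List Classical FunctionalExtensionality PropExtensionality ProofIrrelevance.
Require Import Defs.

Section Aux.
Context {G : TopGroup} {X : TopSpace} (act : G -> X -> X).
Local Notation "a * b" := (gmul G a b).
Local Notation "1" := (gone G).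
Local Notation inv := (ginv G).

Lemma mulV_r (g : G) : g * inv g = 1.
Proof.
  rewrite <- (gmul1 G (g * inv g)).
  rewrite <- (gmulV G (inv g)) at 1.
  rewrite <- gmulA. rewrite (gmulA G (inv g) g (inv g)). rewrite gmulV, gmul1.
  apply gmulV.
Qed.

Lemma mul1_r (g : G) : g * 1 = g.
Proof. rewrite <- (gmulV G g), gmulA, mulV_r, gmul1. reflexivity. Qed.

Lemma inv_uniq (a b : G) : a * b = 1 -> inv b = a.
Proof.
  intros E. rewrite <- (gmul1 G (inv b)). rewrite <- E.
  rewrite <- gmulA, mulV_r, mul1_r. reflexivity.
Qed.

Lemma inv_inv (a : G) : inv (inv a) = a.
Proof. apply inv_uniq, mulV_r. Qed.

Lemma inv_mul (a b : G) : inv (a * b) = inv b * inv a.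
Proof.
  apply inv_uniq. rewrite <- gmulA, (gmulA G (inv a) a b), gmulV, gmul1, gmulV.
  reflexivity.
Qed.

Lemma open_local {T : TopSpace} (A : T -> Prop) :
  (forall x, A x -> exists N, is_open N /\ N x /\ forall y, N y -> A y) -> is_open A.
Proof.
  intros HA.
  assert (E : A = (fun x => exists U, (is_open U /\ forall y, U y -> A y) /\ U x)).
  { apply functional_extensionality; intro x; apply propositional_extensionality; split.
    - intros Ax. destruct (HA x Ax) as [N [? [? ?]]]. exists N; auto.
    - intros [U [[_ HU] Ux]]. auto. }
  rewrite E. apply open_union. intros U [? _]; auto.
Qed.

Definition contG (f : G -> G) (a : G) :=
  forall W : G -> Prop, is_open W -> W (f a) -> exists U, is_open U /\ U a /\ forall u, U u -> W (f u).

Definition contGX (F : G -> X -> X) (a : G) (b : X) :=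
  forall W : X -> Prop, is_open W -> W (F a b) ->
  exists (P : G -> Prop) (Q : X -> Prop), is_open P /\ is_open Q /\ P a /\ Q b /\
    forall u v, P u -> Q v -> W (F u v).

Lemma contG_mulr c a : contG (fun g => g * c) a.
Proof.
  intros W HW Wa. destruct (gmul_cont G a c W HW Wa) as [U [V [? [? [? [? HUV]]]]]].
  exists U; repeat split; auto.
Qed.

Lemma contG_mull c a : contG (fun g => c * g) a.
Proof.
  intros W HW Wa. destruct (gmul_cont G c a W HW Wa) as [U [V [? [? [? [? HUV]]]]]].
  exists V; repeat split; auto.
Qed.

Lemma contG_inv a : contG inv a.
Proof. intros W HW Wa. apply (ginv_cont G a W HW Wa). Qed.

Lemma contG_comp f g a : contG f a -> contG g (f a) -> contG (fun x => g (f x)) a.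
Proof.
  intros Hf Hg W HW Wa. destruct (Hg W HW Wa) as [U [HU [Ua HU']]].
  destruct (Hf U HU Ua) as [U2 [? [? ?]]]. exists U2; auto.
Qed.

Hypothesis hact : is_G_space act.

Lemma act1 x : act 1 x = x.
Proof. apply (proj1 hact). Qed.
Lemma actM g h x : act (g * h) x = act g (act h x).
Proof. apply (proj1 (proj2 hact)). Qed.

Lemma preim_open g (W : X -> Prop) : is_open W -> is_open (fun x => W (act g x)).
Proof.
  intros HW. apply open_local. intros x Wx.
  destruct (proj2 (proj2 hact) g x W HW Wx) as [U [V [? [? [? [? HUV]]]]]].
  exists V; repeat split; auto.
Qed.

Lemma contGX_act f a b : contG f a -> contGX (fun g x => act (f g) x) a b.
Proof.
  intros Hf W HW Wa.
  destruct (proj2 (proj2 hact) (f a) b W HW Wa) as [U [V [? [? [? [? HUV]]]]]].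
  destruct (Hf U ltac:(auto) ltac:(auto)) as [P [? [? ?]]].
  exists P, V; repeat split; auto.
Qed.

Lemma contGX_post F c a b : contGX F a b -> contGX (fun g x => act c (F g x)) a b.
Proof.
  intros HF W HW Wa. apply (HF _ (preim_open c W HW) Wa).
Qed.

Lemma list_inter (good : (G -> Prop) -> (X -> Prop) -> Prop) (x0 : X)
  (mono : forall P Q Q', (forall x, Q' x -> Q x) -> good P Q -> good P Q') :
  forall l : list (G -> Prop),
  (forall P, In P l -> exists Q, is_open Q /\ Q x0 /\ good P Q) ->
  exists Q, is_open Q /\ Q x0 /\ forall P, In P l -> good P Q.
Proof.
  induction l as [|P0 l IH]; intros Hl.
  - exists (fun _ => True). repeat split; [apply open_full | intros P []].
  - destruct (Hl P0 (or_introl eq_refl)) as [Q0 [? [? ?]]].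
    destruct IH as [Q1 [? [? HQ1]]]. { intros P HP. apply Hl. right; auto. }
    exists (fun x => Q0 x /\ Q1 x). split; [apply open_inter; auto|]. split; [auto|].
    intros P [<-|HP].
    + apply (mono P0 Q0); [intros x []; auto | auto].
    + apply (mono P Q1); [intros x []; auto | auto].
Qed.

End Aux.

Lemma sig_eq {A : Type} {P : A -> Prop} (a b : A) (pa : P a) (pb : P b) :
  a = b -> exist P a pa = exist P b pb.
Proof. intros ->. f_equal. apply proof_irrelevance. Qed.


Lemma part1 (G : TopGroup) (X : TopSpace) (act : G -> X -> X)
  (H : G -> Prop) (S : X -> Prop)
  (hact : is_G_space act)
  (hH : is_subgroup H)
  (hS : is_global_slice act H S)
  (hSs : small act S) :
  forall O : G -> X -> Prop, prod_sub_open S O ->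
     is_open (fun x => exists g s, O g s /\ x = act g s).
Proof.
  intros O [HOS HO].
  destruct hS as [[Hinv [Hcl [Hnot Hopen]]] Hglob].
  assert (Sc : is_open (fun y => ~ S y)).
  { apply open_local. intros y Ny.
    assert (Ncl : ~ closure S y) by (intro C; apply Ny, Hcl; auto).
    unfold closure in Ncl. apply not_all_ex_not in Ncl as [U HU].
    apply imply_to_and in HU as [HUo HU]. apply imply_to_and in HU as [Uy HU].
    exists U. repeat split; auto. intros z Uz Sz. apply HU. exists z; auto. }
  apply open_local. intros x0 [g0 [s0 [Og0 ->]]].
  assert (Ss0 : S s0) by (eapply HOS; eauto).
  destruct (HO g0 s0 Og0) as [U [W [HUo [HWo [Ug0 [Ws0 HUW]]]]]].
  destruct (hSs s0) as [V [[V0 [HV0 [V0s0 V0V]]] Hthin]].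
  set (T := transporter act V S).
  set (good := fun (P : G -> Prop) (Q : X -> Prop) =>
     forall g' x, P g' -> Q x -> S (act g' (act (ginv G g0) x)) ->
       exists g s, O g s /\ x = act g s).
  assert (Hcov : forall k, closure T k -> exists P, is_open P /\ P k /\
            exists Q, is_open Q /\ Q (act g0 s0) /\ good P Q).
  { intros k _.
    assert (Eval : act (gmul G k (ginv G g0)) (act g0 s0) = act k s0).
    { rewrite <- (actM act hact), <- gmulA, gmulV, mul1_r. reflexivity. }
    destruct (classic (S (act k s0))) as [Sk | NSk].
    - assert (Hk : H k).
      { apply NNPP. intro NH. exact (Hnot k NH s0 Ss0 Sk). }
      set (u := fun g' => gmul G (ginv G (gmul G g' (ginv G g0))) k).
      assert (Uuk : U (u k)).
      { unfold u. rewrite inv_mul, inv_inv, <- gmulA, gmulV, mul1_r. exact Ug0. }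
      assert (cu : contG u k).
      { unfold u. apply (contG_comp (fun g' => ginv G (gmul G g' (ginv G g0))) (fun y => gmul G y k)).
        - apply (contG_comp (fun g' => gmul G g' (ginv G g0)) (ginv G)).
          + apply contG_mulr.
          + apply contG_inv.
        - apply contG_mulr. }
      destruct (cu U HUo Uuk) as [P1 [HP1 [P1k HP1u]]].
      assert (cs : contGX (fun g' x => act (ginv G k) (act (gmul G g' (ginv G g0)) x)) k (act g0 s0)).
      { apply (contGX_post act hact (fun g' x => act (gmul G g' (ginv G g0)) x)).
        apply (contGX_act act hact (fun g' => gmul G g' (ginv G g0))). apply contG_mulr. }
      assert (Ws : W (act (ginv G k) (act (gmul G k (ginv G g0)) (act g0 s0)))).
      { rewrite Eval, <- (actM act hact), gmulV, (act1 act hact). exact Ws0. }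
      destruct (cs W HWo Ws) as [P2 [Q [HP2 [HQ [P2k [Qx HPQ]]]]]].
      exists (fun g => P1 g /\ P2 g). split; [apply open_inter; auto|]. split; [auto|].
      exists Q. repeat split; auto.
      intros g' x [P1g P2g] Qx' Sy.
      rewrite <- (actM act hact) in Sy.
      set (s := act (ginv G k) (act (gmul G g' (ginv G g0)) x)).
      assert (Sss : S s).
      { apply Hinv. exists (ginv G k), (act (gmul G g' (ginv G g0)) x).
        repeat split; auto. apply (proj2 (proj2 hH)); auto. }
      exists (u g'), s. split.
      + apply HUW; [apply HP1u; auto | apply HPQ; auto | auto].
      + unfold s, u. rewrite <- !(actM act hact).
        rewrite <- (gmulA G (ginv G _) k (ginv G k)), mulV_r, mul1_r, gmulV, (act1 act hact).
        reflexivity.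
    - assert (cs : contGX (fun g' x => act (gmul G g' (ginv G g0)) x) k (act g0 s0)).
      { apply (contGX_act act hact (fun g' => gmul G g' (ginv G g0))). apply contG_mulr. }
      destruct (cs _ Sc ltac:(simpl; rewrite Eval; exact NSk)) as [P [Q [HP [HQ [Pk [Qx HPQ]]]]]].
      exists P. repeat split; auto. exists Q. repeat split; auto.
      intros g' x Pg Qx' Sy. rewrite <- (actM act hact) in Sy. exfalso. exact (HPQ g' x Pg Qx' Sy). }
  destruct (Hthin (fun P => is_open P /\ exists Q, is_open Q /\ Q (act g0 s0) /\ good P Q))
    as [l [Hl Hlc]].
  { intros P [? _]; auto. }
  { intros k Ck. destruct (Hcov k Ck) as [P [? [? ?]]]. exists P; auto. }
  destruct (list_inter good (act g0 s0)) with (l := l) as [Q [HQ [Qx HQl]]].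
  { intros P Q Q' HQQ gd g' x Pg Qx' Sy. apply (gd g' x Pg (HQQ x Qx') Sy). }
  { intros P HP. apply (proj2 (Hl P HP)). }
  exists (fun x => V0 (act (ginv G g0) x) /\ Q x). split; [|split].
  - apply open_inter; auto. apply (preim_open act hact); auto.
  - split; auto. rewrite <- (actM act hact), gmulV, (act1 act hact). auto.
  - intros x [Vx Qx']. destruct (Hglob x) as [g [s [_ [Ss ->]]]].
    set (k := gmul G (ginv G g) g0).
    assert (Tk : T k).
    { exists (act (ginv G g0) (act g s)). split; auto.
      unfold k. rewrite <- !(actM act hact), <- (gmulA G (ginv G g) g0 (ginv G g0)), mulV_r,
        mul1_r, gmulV, (act1 act hact). exact Ss. }
    assert (Ck : closure T k) by (intros U' _ U'k; exists k; auto).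
    destruct (Hlc k Ck) as [P [Pl Pk]].
    apply (HQl P Pl k (act g s) Pk Qx').
    unfold k. rewrite <- !(actM act hact), <- (gmulA G (ginv G g) g0 (ginv G g0)), mulV_r,
        mul1_r, gmulV, (act1 act hact). exact Ss.
Qed.

Theorem theorem2p1 (G : TopGroup) (X : TopSpace) (act : G -> X -> X)
  (H : G -> Prop) (S : X -> Prop)
  (hGt : @tychonoff G) (hXt : @tychonoff X)
  (hGlc : @locally_compact G)
  (hact : is_G_space act)
  (hprop : proper_action act)
  (hH : is_subgroup H) (hHc : compact H)
  (hS : is_global_slice act H S)
  (hSs : small act S) :
  (forall O : G -> X -> Prop, prod_sub_open S O ->
     is_open (fun x => exists g s, O g s /\ x = act g s))
  /\
  (forall A : X -> Prop, subspace_open S A ->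
     quotient_open act (fun o => exists s, A s /\ o = orbit_map act s)).
Proof.
  pose proof (part1 G X act H S hact hH hS hSs) as P1.
  split; [exact P1|].
  intros A [W [HW HA]].
  assert (HO : prod_sub_open S (fun (_ : G) s => A s)).
  { split.
    - intros g x Ax. apply HA in Ax. tauto.
    - intros g s As. exists (fun _ => True), W. repeat split; try apply open_full; auto.
      + apply HA in As; tauto.
      + intros g' s' _ Ws' Ss'. apply HA; auto. }
  specialize (P1 _ HO).
  unfold quotient_open. apply open_local.
  intros x [s [As Eo]].
  assert (Hx : orbit act s x).
  { assert (E := f_equal (@proj1_sig _ _) Eo). simpl in E. rewrite <- E.
    exists (gone G). symmetry. apply (act1 act hact). }
  destruct Hx as [g Hg].
  eexists. split; [exact P1|]. split.
  - exists g, s; auto.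
  - intros y [g' [s' [As' ->]]]. exists s'. split; auto.
    apply sig_eq. apply functional_extensionality; intro z. apply propositional_extensionality.
    split; intros [h Hh].
    + exists (gmul G h g'). rewrite (actM act hact); auto.
    + exists (gmul G h (ginv G g')). rewrite (actM act hact), <- (actM act hact (ginv G g')), gmulV, (act1 act hact); auto.
Qed.
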